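(* Fix $i,j\in\{1,\dots,I\}$ and $v,v_*\in\mathbb{R}^3$, and let $E=\langle v\rangle_i^2+\langle v_*\rangle_j^2$ and $r=\frac{m_i}{m_i+m_j}$. Then there exist functions $p=p(v,v_*,m_i,m_j)$, $q=q(v,v_*,m_i,m_j)$ and $s=s(v,v_*,m_i,m_j)\in[0,1]$ with $p+q=E$ such that, with $\lambda:=2\sqrt{r(1-r)(sE-1)((1-s)E-1)}$, for every $\sigma\in S^2$ $$\langle v'\rangle_i^2=p+\lambda\,\sigma\cdot\hat V,\qquad \langle v'_*\rangle_j^2=q-\lambda\,\sigma\cdot\hat V,$$ so that $\langle v'\rangle_i^2+\langle v'_*\rangle_j^2=p+q=E=\langle v\rangle_i^2+\langle v_*\rangle_j^2$. Moreover $p+\lambda\le E$ and $q+\lambda\le E$ for all $v,v_*\in\mathbb{R}^3$ and all $m_i,m_j>0$.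
   Context: Masses $m_1,\dots,m_I>0$, $M:=\sum_{\ell=1}^I m_\ell$, $\langle v\rangle_i:=\big(1+\tfrac{m_i}{M}|v|^2\big)^{1/2}$. For the pair $(i,j)$: $V=\frac{m_iv+m_jv_*}{m_i+m_j}$ (center of mass velocity), $\hat V=V/|V|$, and $v'=V+\frac{m_j}{m_i+m_j}|v-v_*|\sigma$, $v'_*=V-\frac{m_i}{m_i+m_j}|v-v_*|\sigma$ for $\sigma\in S^2$. *)

(* Defs.v *)
From HB Require Import structures.
From mathcomp Require Import all_boot all_order all_algebra.
Set Implicit Arguments. Unset Strict Implicit. Unset Printing Implicit Defensive.
Import Order.TTheory GRing.Theory Num.Theory.
Local Open Scope ring_scope.

Section Defs.
Variable R : rcfType.

Definition dot (x y : 'rV[R]_3) : R := \sum_(k < 3) x 0 k * y 0 k.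
Definition vnorm (x : 'rV[R]_3) : R := Num.sqrt (dot x x).

Definition Mtot (I : nat) (m : 'I_I -> R) : R := \sum_(l < I) m l.

Definition jbr (I : nat) (m : 'I_I -> R) (i : 'I_I) (x : 'rV[R]_3) : R :=
  Num.sqrt (1 + m i / Mtot m * vnorm x ^+ 2).

Definition Vcm (mi mj : R) (v vs : 'rV[R]_3) : 'rV[R]_3 :=
  (mi + mj)^-1 *: (mi *: v + mj *: vs).

(* unit vector V/|V| (with the field convention 0^-1 = 0, so it is 0 when V = 0) *)
Definition Vhat (mi mj : R) (v vs : 'rV[R]_3) : 'rV[R]_3 :=
  (vnorm (Vcm mi mj v vs))^-1 *: Vcm mi mj v vs.

Definition vpost (mi mj : R) (v vs sigma : 'rV[R]_3) : 'rV[R]_3 :=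
  Vcm mi mj v vs + (mj / (mi + mj) * vnorm (v - vs)) *: sigma.
Definition vspost (mi mj : R) (v vs sigma : 'rV[R]_3) : 'rV[R]_3 :=
  Vcm mi mj v vs - (mi / (mi + mj) * vnorm (v - vs)) *: sigma.

End Defs.

(* Main.v *)
Require Import Defs.
From HB Require Import structures.
From mathcomp Require Import all_boot all_order all_algebra.
From mathcomp Require Import ring lra.
Import Order.TTheory GRing.Theory Num.Theory.
Local Open Scope ring_scope.

Lemma dotE (R : rcfType) (x y : 'rV[R]_3) :
  dot x y = x 0 0 * y 0 0 + x 0 1 * y 0 1 + x 0 2%:R * y 0 2%:R.
Proof. rewrite /dot !big_ord_recr big_ord0 /= add0r. by congr (_ + _ + _); congr (_ * _); congr (_ _ _); apply/val_inj. Qed.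

Lemma dot_ge0 (R : rcfType) (x : 'rV[R]_3) : 0 <= dot x x.
Proof. rewrite dotE; nra. Qed.

Lemma vnorm2 (R : rcfType) (x : 'rV[R]_3) : vnorm x ^+ 2 = dot x x.
Proof. by rewrite /vnorm sqr_sqrtr // dot_ge0. Qed.

Lemma jbr2 (R : rcfType) I (m : 'I_I -> R) (hm : forall l, 0 < m l) i x :
  jbr m i x ^+ 2 = 1 + m i / Mtot m * dot x x.
Proof.
rewrite /jbr sqr_sqrtr ?vnorm2 //.
have hM : 0 < Mtot m.
  rewrite /Mtot (bigD1 i) //=; apply: ltr_pwDl => //; apply: sumr_ge0 => l _; exact: ltW.
have h2 := dot_ge0 _ x.
have : 0 <= m i / Mtot m by apply: divr_ge0; apply: ltW.
nra.
Qed.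

Lemma dot_exp (R : rcfType) (x y : 'rV[R]_3) (c : R) :
  dot (x + c *: y) (x + c *: y) = dot x x + 2 * c * dot y x + c ^+ 2 * dot y y.
Proof. rewrite !dotE !mxE; ring. Qed.

Lemma dot_expN (R : rcfType) (x y : 'rV[R]_3) (c : R) :
  dot (x - c *: y) (x - c *: y) = dot x x - 2 * c * dot y x + c ^+ 2 * dot y y.
Proof. rewrite !dotE !mxE; ring. Qed.

Lemma dotZr (R : rcfType) (x y : 'rV[R]_3) (c : R) :
  dot y (c *: x) = c * dot y x.
Proof. rewrite !dotE !mxE; ring. Qed.

Lemma dot0 (R : rcfType) (x y : 'rV[R]_3) : dot x x = 0 -> dot y x = 0.
Proof.
rewrite !dotE => h.
have h0 : x 0 0 = 0 by apply/eqP; rewrite -sqrf_eq0; apply/eqP; nra.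
have h1 : x 0 1 = 0 by apply/eqP; rewrite -sqrf_eq0; apply/eqP; nra.
have h2 : x 0 2%:R = 0 by apply/eqP; rewrite -sqrf_eq0; apply/eqP; nra.
by rewrite h0 h1 h2; ring.
Qed.

Theorem lemma4p1 (R : rcfType) (I : nat) (m : 'I_I -> R)
  (hm : forall l, 0 < m l) (i j : 'I_I) (v vs : 'rV[R]_3) :
  let E := jbr m i v ^+ 2 + jbr m j vs ^+ 2 in
  let r := m i / (m i + m j) in
  exists p q s : R,
    [/\ 0 <= s <= 1, p + q = E &
    let lambda := 2 * Num.sqrt (r * (1 - r) * (s * E - 1) * ((1 - s) * E - 1)) in
    [/\ forall sigma : 'rV[R]_3, dot sigma sigma = 1 ->
          jbr m i (vpost (m i) (m j) v vs sigma) ^+ 2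
            = p + lambda * dot sigma (Vhat (m i) (m j) v vs)
          /\ jbr m j (vspost (m i) (m j) v vs sigma) ^+ 2
            = q - lambda * dot sigma (Vhat (m i) (m j) v vs),
        p + lambda <= E & q + lambda <= E]].
Proof.
move=> E r.
have hM : 0 < Mtot m.
  rewrite /Mtot (bigD1 i) //=; apply: ltr_pwDl => //; apply: sumr_ge0 => l _; exact: ltW.
have hmi := hm i; have hmj := hm j.
have hEdef : E = 2 + (m i * dot v v + m j * dot vs vs) / Mtot m.
  rewrite /E !jbr2 //; field; exact: lt0r_neq0.
rewrite /r; move: hEdef; rewrite /vpost /vspost /Vhat.
clear r; move: E => E.
set M := Mtot m. set mi := m i. set mj := m j.
set W := Vcm mi mj v vs. set g := vnorm (v - vs). set n := vnorm W.
move=> hEdef.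
have hS : 0 < mi + mj by apply: addr_gt0.
have hn2 : n ^+ 2 = dot W W by rewrite vnorm2.
have hg2 : g ^+ 2 = dot (v - vs) (v - vs) by rewrite vnorm2.
have hg0 : 0 <= g by apply: sqrtr_ge0.
have hn0 : 0 <= n by apply: sqrtr_ge0.
have energy : mi * dot v v + mj * dot vs vs
    = (mi + mj) * n ^+ 2 + mi * mj / (mi + mj) * g ^+ 2.
  rewrite hn2 hg2 !dotE /W /Vcm !mxE; field; exact: lt0r_neq0.
set X := (mi + mj) * n ^+ 2 / M.
set Y := mi * mj / (mi + mj) * g ^+ 2 / M.
have hX : 0 <= X by rewrite /X; apply: divr_ge0; [apply: mulr_ge0; [exact: ltW|exact: sqr_ge0]|exact: ltW].
have hY : 0 <= Y.
  rewrite /Y; apply: divr_ge0; last exact: ltW.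
  apply: mulr_ge0; last exact: sqr_ge0.
  by apply: divr_ge0; [apply: mulr_ge0; apply: ltW|apply: ltW].
have hE : E = 2 + X + Y.
  rewrite hEdef energy /X /Y; field; by apply/andP; split; apply: lt0r_neq0.
have hE0 : 0 < E by rewrite hE; lra.
set p := 1 + mi / M * n ^+ 2 + mi / M * (mj / (mi + mj) * g) ^+ 2.
set q := 1 + mj / M * n ^+ 2 + mj / M * (mi / (mi + mj) * g) ^+ 2.
exists p, q, ((1 + X) / E).
have hMn : M != 0 by exact: lt0r_neq0.
have hSn : mi + mj != 0 by exact: lt0r_neq0.
have hEn : E != 0 by exact: lt0r_neq0.
split.
- apply/andP; split; first by apply: divr_ge0; lra.
  by rewrite ler_pdivrMr // mul1r hE; lra.
- rewrite /p /q hE /X /Y; field; by apply/andP.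
set lam := 2 * Num.sqrt _.
have hlam : lam = 2 * (mi / M * (mj / (mi + mj)) * g * n).
  rewrite /lam.
  have -> : (1 + X) / E * E - 1 = X by field.
  have -> : (1 - (1 + X) / E) * E - 1 = Y by rewrite hE; field; rewrite -hE.
  have -> : mi / (mi + mj) * (1 - mi / (mi + mj)) * X * Y
      = (mi / M * (mj / (mi + mj)) * g * n) ^+ 2.
    rewrite /X /Y; field; by apply/andP.
  rewrite sqrtr_sqr ger0_norm //.
  apply: mulr_ge0 => //; apply: mulr_ge0 => //; apply: mulr_ge0.
    by apply: divr_ge0; apply: ltW.
  by apply: divr_ge0; [apply: ltW| apply: ltW].
have hpq : E = p + q by rewrite /p /q hE /X /Y; field; apply/andP.
split.
- move=> sigma hs.
  have nt : n * dot sigma (n^-1 *: W) = dot sigma W.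
    rewrite dotZr; have [n0|nz] := eqVneq n 0.
      by rewrite n0 mul0r; symmetry; apply: dot0; rewrite -hn2 n0 expr0n.
    by rewrite mulrA mulfV // mul1r.
  rewrite !jbr2 // dot_exp dot_expN hs -hn2 -nt hlam /p /q; rewrite -/mi -/mj -/M; set t := dot sigma (n^-1 *: W); split; field; by apply/andP.
- rewrite -subr_ge0.
  have -> : E - (p + lam) = 1 + mj / M * (n - mi / (mi + mj) * g) ^+ 2.
    rewrite hpq hlam /p /q; field; by apply/andP.
  apply: addr_ge0 => //; apply: mulr_ge0; last exact: sqr_ge0.
  by apply: divr_ge0; apply: ltW.
- rewrite -subr_ge0.
  have -> : E - (q + lam) = 1 + mi / M * (n - mj / (mi + mj) * g) ^+ 2.
    rewrite hpq hlam /p /q; field; by apply/andP.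
  apply: addr_ge0 => //; apply: mulr_ge0; last exact: sqr_ge0.
  by apply: divr_ge0; apply: ltW.
Qed.
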